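(* Let $M$ be a smooth manifold of dimension $n>2$ and let $K$ be a semi-basic, vector-valued $2$-form on $T_0M$. Then $$ i_K\omega=0 \quad\text{for all } \omega\in\Lambda^2(T_0M) \text{ with } i_J\omega=0 $$ holds if and only if there exists a semi-basic $1$-form $\xi$ on $T_0M$ such that $K=\xi\wedge J$. Moreover, such $\xi=\xi_i\,dx^i$, if it exists, is unique and is given by $(n-1)\xi_i=K^j_{ji}=-K^j_{ij}$.
   Context: $TM$ has induced coordinates $(x^i,y^i)$, $T_0M=TM\setminus\{0\}$, and $J=dx^i\otimes\frac{\partial}{\partial y^i}$ is the vertical endomorphism. A vector-valued $2$-form $K$ on $T_0M$ is semi-basic if it takes vertical values and vanishes whenever one argument is vertical; locally $K=K^i_{jk}\frac{\partial}{\partial y^i}\otimes dx^j\wedge dx^k$ with $K^i_{jk}=-K^i_{kj}$. A semi-basic $1$-form is $\xi=\xi_i(x,y)dx^i$. For $\omega\in\Lambda^2(T_0M)$: $i_J\omega(X,Y)=\omega(JX,Y)+\omega(X,JY)$ and $i_K\omega(X,Y,Z)=\omega(K(X,Y),Z)+\omega(K(Z,X),Y)+\omega(K(Y,Z),X)$. The vector-valued $2$-form $\xi\wedge J$ is $(\xi\wedge J)(X,Y)=\xi(X)JY-\xi(Y)JX$. *)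

(* Defs.v *)
(* Local-coordinate (one chart of T_0M) model. *)
From HB Require Import structures.
From mathcomp Require Import all_boot all_order all_algebra.
From mathcomp Require Import reals.
Set Implicit Arguments. Unset Strict Implicit. Unset Printing Implicit Defensive.
Import Order.TTheory GRing.Theory Num.Theory.
Local Open Scope ring_scope.

Section TangentAlgebra.
Variables (R : realType) (n : nat).

(* A tangent vector to TM at a point of the chart, in the induced frame
   (d/dx^1..d/dx^n, d/dy^1..d/dy^n): the first n coordinates are the
   d/dx-components, the last n the d/dy-components. *)
Definition tvec := 'rV[R]_(n + n).

Definition dx (j : 'I_n) (X : tvec) : R := X 0 (lshift n j).
Definition dy (i : 'I_n) (X : tvec) : R := X 0 (rshift n i).

Definition vert (v : 'rV[R]_n) : tvec := row_mx 0 v.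

Definition J (X : tvec) : tvec := vert (\row_i dx i X).

(* A 2-form at a point: omega(X,Y) = X W Y^T with W skew-symmetric. *)
Definition form2 (W : 'M[R]_(n + n)) (X Y : tvec) : R :=
  \sum_a \sum_b X 0 a * W a b * Y 0 b.

(* semi-basic vector-valued 2-form with components
   K^i_{jk} = dy^i (K (d/dx^j, d/dx^k)), i.e. Kc i j k = K^i_{jk} *)
Definition Kval (Kc : 'I_n -> 'I_n -> 'I_n -> R) (X Y : tvec) : tvec :=
  vert (\row_i \sum_j \sum_k Kc i j k * dx j X * dx k Y).

Definition form1 (xi : 'I_n -> R) (X : tvec) : R := \sum_j xi j * dx j X.

Definition wedgeJ (xi : 'I_n -> R) (X Y : tvec) : tvec :=
  form1 xi X *: J Y - form1 xi Y *: J X.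

Definition iJ (W : 'M[R]_(n + n)) (X Y : tvec) : R :=
  form2 W (J X) Y + form2 W X (J Y).

Definition iK (Kc : 'I_n -> 'I_n -> 'I_n -> R) (W : 'M[R]_(n + n))
  (X Y Z : tvec) : R :=
  form2 W (Kval Kc X Y) Z + form2 W (Kval Kc Z X) Y + form2 W (Kval Kc Y Z) X.

End TangentAlgebra.

(* Main.v *)
Require Import Defs.
From HB Require Import structures.
From mathcomp Require Import all_boot all_order all_algebra.
From mathcomp Require Import reals.
From mathcomp Require Import ring.
From Stdlib Require Import FunctionalExtensionality.
Set Implicit Arguments. Unset Strict Implicit. Unset Printing Implicit Defensive.
Import Order.TTheory GRing.Theory Num.Theory.
Local Open Scope ring_scope.

Section H.
Variables (R : realType) (n : nat).
Implicit Types (X Y Z U V : tvec R n) (xi : 'I_n -> R) (Kc : 'I_n -> 'I_n -> 'I_n -> R) (W : 'M[R]_(n+n)).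

Lemma sumD (F : 'I_n -> R) i : \sum_k F k * (k == i)%:R = F i.
Proof.
rewrite (bigD1 i) //= eqxx mulr1 big1 ?addr0 // => k /negbTE ->; by rewrite mulr0.
Qed.

Lemma sumD' (F : 'I_n -> R) i : \sum_k F k * (i == k)%:R = F i.
Proof. by under eq_bigr => k _ do rewrite eq_sym; exact: sumD. Qed.

Definition e (a : 'I_n) : 'rV[R]_n := \row_k (k == a)%:R.
Definition hvec (x : 'rV[R]_n) : tvec R n := row_mx x 0.

Lemma dx_h (j : 'I_n) (x : 'rV[R]_n) : dx j (hvec x) = x 0 j.
Proof. by rewrite /dx /hvec row_mxEl. Qed.
Lemma dy_h (j : 'I_n) (x : 'rV[R]_n) : dy j (hvec x) = 0.
Proof. by rewrite /dy /hvec row_mxEr mxE. Qed.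
Lemma dx_v (j : 'I_n) (x : 'rV[R]_n) : dx j (vert x) = 0.
Proof. by rewrite /dx /vert row_mxEl mxE. Qed.
Lemma dy_v (j : 'I_n) (x : 'rV[R]_n) : dy j (vert x) = x 0 j.
Proof. by rewrite /dy /vert row_mxEr. Qed.
Lemma dx_J (j : 'I_n) (X : tvec R n) : dx j (J X) = 0.
Proof. exact: dx_v. Qed.
Lemma dy_J (j : 'I_n) (X : tvec R n) : dy j (J X) = dx j X.
Proof. by rewrite /J dy_v mxE. Qed.

Lemma wedgeJ_vert xi X Y : wedgeJ xi X Y =
  vert (\row_i (form1 xi X * dx i Y - form1 xi Y * dx i X)).
Proof.
rewrite /wedgeJ /J /vert !scale_row_mx opp_row_mx add_row_mx !scaler0 subr0.
congr row_mx; apply/rowP => i; rewrite !mxE; ring.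
Qed.

Lemma Kval_wedge Kc xi :
  (forall X Y, Kval Kc X Y = wedgeJ xi X Y) <->
  (forall i j k, Kc i j k = xi j * (i == k)%:R - xi k * (i == j)%:R).
Proof.
split=> H.
  move=> i j k; have := congr1 (dy i) (H (hvec (e j)) (hvec (e k))).
  rewrite wedgeJ_vert /Kval !dy_v !mxE /form1.
  under eq_bigr => a _ do under eq_bigr => b _ do rewrite !dx_h !mxE.
  under eq_bigr => a _ do rewrite sumD.
  rewrite sumD => ->.
  under eq_bigr => a _ do rewrite dx_h mxE.
  rewrite sumD.
  under eq_bigr => a _ do rewrite dx_h mxE.
  by rewrite sumD !dx_h !mxE.
move=> X Y; rewrite wedgeJ_vert /Kval; congr vert; apply/rowP => i; rewrite !mxE.
under eq_bigr => a _ do under eq_bigr => b _ do rewrite H.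
have -> : \sum_a \sum_b (xi a * (i == b)%:R - xi b * (i == a)%:R) * dx a X * dx b Y
   = \sum_a ((xi a * dx a X) * \sum_b dx b Y * (i == b)%:R
            - (dx a X * (i == a)%:R) * \sum_b xi b * dx b Y).
  apply: eq_bigr => a _; rewrite !mulr_sumr -sumrB; apply: eq_bigr => b _; ring.
rewrite sumD' sumrB -!mulr_suml sumD'; rewrite /form1; ring.
Qed.

Lemma form2_lin W (a b : R) U V Z :
  form2 W (a *: U - b *: V) Z = a * form2 W U Z - b * form2 W V Z.
Proof.
rewrite /form2 !mulr_sumr -sumrB; apply: eq_bigr => i _.
rewrite !mulr_sumr -sumrB; apply: eq_bigr => j _; rewrite !mxE; ring.
Qed.

Lemma form2_skew W X Y : W^T = - W -> form2 W X Y = - form2 W Y X.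
Proof.
move=> hs; have hW : forall i j, W j i = - W i j.
  by move=> i j; have := congr1 (fun M : 'M[R]_(n+n) => M i j) hs; rewrite !mxE.
rewrite /form2 exchange_big -sumrN; apply: eq_bigr => i _.
rewrite -sumrN; apply: eq_bigr => j _; rewrite (hW j i); ring.
Qed.

Lemma form2_block (A B C D : 'M[R]_n) X Y :
  form2 (block_mx A B C D) X Y = \sum_i \sum_k
   (dx i X * A i k * dx k Y + dx i X * B i k * dy k Y +
    dy i X * C i k * dx k Y + dy i X * D i k * dy k Y).
Proof.
rewrite /form2 big_split_ord /=.
under eq_bigr => i _ do rewrite big_split_ord /=.
under [X in _ + X]eq_bigr => i _ do rewrite big_split_ord /=.
rewrite -big_split /=; apply: eq_bigr => i _.
rewrite -!big_split /=; apply: eq_bigr => k _.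
rewrite block_mxEul block_mxEur block_mxEdl block_mxEdr /dx /dy; ring.
Qed.


Definition W0 (S : 'M[R]_n) : 'M[R]_(n + n) := block_mx 0 S (- S) 0.

Lemma form2_W0 S X Y : form2 (W0 S) X Y =
  \sum_i \sum_k (dx i X * S i k * dy k Y - dy i X * S i k * dx k Y).
Proof.
rewrite form2_block; apply: eq_bigr => i _; apply: eq_bigr => k _; rewrite !mxE; ring.
Qed.

Lemma iJ_W0 S X Y : iJ (W0 S) X Y = 0.
Proof.
rewrite /iJ !form2_W0 -big_split big1 // => i _; rewrite -big_split big1 // => k _.
rewrite !dx_J !dy_J /=; ring.
Qed.

Lemma W0_skew S : S^T = S -> (W0 S)^T = - W0 S.
Proof.
move=> hS; rewrite /W0 tr_block_mx opp_block_mx !trmx0 oppr0 opprK hS.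
by rewrite linearN /= hS.
Qed.

Definition Spc (p c : 'I_n) : 'M[R]_n :=
  \matrix_(i, k) ((i == p)%:R * (k == c)%:R + (i == c)%:R * (k == p)%:R).

Lemma Spc_sym p c : (Spc p c)^T = Spc p c.
Proof. apply/matrixP => i k; rewrite !mxE; ring. Qed.

Definition Bf (S : 'M[R]_n) (u w : 'rV[R]_n) := \sum_i \sum_k u 0 i * S i k * w 0 k.

Lemma form2_vh S u z : form2 (W0 S) (vert u) (hvec z) = - Bf S u z.
Proof.
rewrite form2_W0 /Bf -sumrN; apply: eq_bigr => i _; rewrite -sumrN; apply: eq_bigr => k _.
rewrite dx_v dy_h dy_v dx_h; ring.
Qed.

Lemma B_Spc p c u w : Bf (Spc p c) u w = u 0 p * w 0 c + u 0 c * w 0 p.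
Proof.
rewrite /Bf.
have -> : \sum_i \sum_k u 0 i * Spc p c i k * w 0 k =
  \sum_i (u 0 i * (i == p)%:R * \sum_k w 0 k * (k == c)%:R
        + u 0 i * (i == c)%:R * \sum_k w 0 k * (k == p)%:R).
  apply: eq_bigr => i _; rewrite !mulr_sumr -big_split; apply: eq_bigr => k _.
  rewrite mxE /=; ring.
rewrite !sumD big_split -!mulr_suml !sumD /=; ring.
Qed.

Lemma Kval_e Kc (a b : 'I_n) : Kval Kc (hvec (e a)) (hvec (e b)) = vert (\row_i Kc i a b).
Proof.
rewrite /Kval; congr vert; apply/rowP => i; rewrite !mxE.
under eq_bigr => j _ do under eq_bigr => k _ do rewrite !dx_h !mxE.
under eq_bigr => j _ do rewrite sumD.
by rewrite sumD.
Qed.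

Lemma iK_e Kc (p a b c : 'I_n) :
  iK Kc (W0 (Spc p c)) (hvec (e a)) (hvec (e b)) (hvec (e c)) =
  - ((Kc p a b * (c == c)%:R + Kc c a b * (p == c)%:R)
   + (Kc p c a * (c == b)%:R + Kc c c a * (p == b)%:R)
   + (Kc p b c * (c == a)%:R + Kc c b c * (p == a)%:R)).
Proof.
rewrite /iK !Kval_e !form2_vh !B_Spc !mxE; ring.
Qed.


Lemma n_pos : (2 < n)%N -> (0 < n)%N.
Proof. by move=> hn; apply: ltnW (ltnW hn). Qed.

Lemma natn1 : (0 < n)%N -> n%:R = (n.-1)%:R + 1 :> R.
Proof. by move=> h; rewrite natr1 prednK. Qed.

Lemma comp_from_iK Kc :
  (2 < n)%N -> (forall i j k, Kc i j k = - Kc i k j) ->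
  (forall S, S^T = S -> forall X Y Z, iK Kc (W0 S) X Y Z = 0) ->
  forall p a b, (n.-1)%:R * Kc p a b =
    (p == b)%:R * \sum_j Kc j a j - (p == a)%:R * \sum_j Kc j b j.
Proof.
move=> hn hsk H p a b.
have Hs : \sum_c ((Kc p a b * (c == c)%:R + Kc c a b * (p == c)%:R)
   + (Kc p c a * (c == b)%:R + Kc c c a * (p == b)%:R)
   + (Kc p b c * (c == a)%:R + Kc c b c * (p == a)%:R)) = 0.
  apply: big1 => c _; apply/eqP; rewrite -oppr_eq0 -iK_e.
  by rewrite (H _ (Spc_sym p c)).
rewrite !big_split /= in Hs.
have e1 : \sum_(i < n) Kc p a b * (i == i)%:R = Kc p a b *+ n.
  rewrite (eq_bigr (fun _ => Kc p a b)) ?sumr_const ?card_ord // => i _.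
  by rewrite eqxx mulr1.
rewrite e1 sumD' sumD sumD -!mulr_suml in Hs.
have hcc : \sum_c Kc c c a = - \sum_j Kc j a j.
  by rewrite -sumrN; apply: eq_bigr => j _; rewrite hsk.
rewrite hcc (hsk p b a) -[Kc p a b *+ n]mulr_natr (natn1 (n_pos hn)) in Hs.
apply: subr0_eq; rewrite -[RHS]Hs /=; ring.
Qed.


Lemma trace_xi Kc xi : (2 < n)%N ->
  (forall X Y, Kval Kc X Y = wedgeJ xi X Y) ->
  forall i, (n.-1)%:R * xi i = \sum_j Kc j i j.
Proof.
move=> hn /Kval_wedge H i.
under eq_bigr => j _ do rewrite H eqxx mulr1.
rewrite sumrB sumr_const card_ord sumD -[xi i *+ n]mulr_natr (natn1 (n_pos hn)); ring.
Qed.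

Lemma hm : (2 < n)%N -> (n.-1)%:R != 0 :> R.
Proof. by rewrite pnatr_eq0; case: n => [|[|m]]. Qed.

End H.

Unset Implicit Arguments.

(* P = the points of (a coordinate chart of) T_0M; fields are families indexed by P. *)
Theorem proposition3p2 (R : realType) (n : nat) (P : Type)
    (K : P -> 'I_n -> 'I_n -> 'I_n -> R) :
  (2 < n)%N ->
  (forall p i j k, K p i j k = - K p i k j) ->
  ((forall W : P -> 'M[R]_(n + n),
      (forall p, (W p)^T = - W p) ->
      (forall p (X Y : tvec R n), iJ (W p) X Y = 0) ->
      forall p (X Y Z : tvec R n), iK (K p) (W p) X Y Z = 0)
   <->
   (exists xi : P -> 'I_n -> R,
      forall p (X Y : tvec R n), Kval (K p) X Y = wedgeJ (xi p) X Y))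
  /\
  (forall xi1 xi2 : P -> 'I_n -> R,
      (forall p (X Y : tvec R n), Kval (K p) X Y = wedgeJ (xi1 p) X Y) ->
      (forall p (X Y : tvec R n), Kval (K p) X Y = wedgeJ (xi2 p) X Y) ->
      xi1 = xi2)
  /\
  (forall xi : P -> 'I_n -> R,
      (forall p (X Y : tvec R n), Kval (K p) X Y = wedgeJ (xi p) X Y) ->
      forall p (i : 'I_n),
        (n.-1)%:R * xi p i = \sum_(j < n) K p j i j /\
        \sum_(j < n) K p j i j = - \sum_(j < n) K p j j i).
Proof.
move=> hn hsk.
have hm' := hm R hn.
split; last split.
- split.
  + move=> H.
    exists (fun p i => (n.-1)%:R^-1 * \sum_j K p j i j) => p.
    apply/Kval_wedge => i j k.
    have hc := @comp_from_iK R n (K p) hn (hsk p)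
      (fun S hS => H (fun _ => W0 S) (fun _ => W0_skew hS) (fun _ => iJ_W0 S) p) i j k.
    rewrite -[K p i j k](mulKf hm') hc; ring.
  + case=> xi hxi W hs hJ p X Y Z.
    have gs : forall U V, form2 (W p) (J U) V = form2 (W p) (J V) U.
      move=> U V; have := hJ p U V; rewrite /iJ (@form2_skew _ _ (W p) U (J V) (hs p)) => h.
      by apply/eqP; rewrite -subr_eq0 h.
    rewrite /iK !hxi /wedgeJ !form2_lin (gs Z Y) (gs Z X) (gs Y X); ring.
- move=> xi1 xi2 h1 h2; apply: functional_extensionality => p.
  apply: functional_extensionality => i; apply: (mulfI hm').
  by rewrite (trace_xi hn (h1 p)) (trace_xi hn (h2 p)).
- move=> xi hxi p i; split; first exact: trace_xi hn (hxi p) i.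
  by rewrite -sumrN; apply: eq_bigr => j _; rewrite hsk.
Qed.
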